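(* Let $(S^\Omega,\mathcal T)$ be a resource theory with a fair currency $\mathcal C$ (value function $\mathrm{Val}$) for a target $\mathcal S$. Then for all $V,W\in\mathcal S$ and every $\varepsilon>0$, $$\mathrm{Balance}(V\to W)\ge\mathrm{Yield}(V)-\mathrm{Cost}(W)-\varepsilon,$$ and the same holds with $\varepsilon=0$ when $\mathrm{Yield}(V)$ and $\mathrm{Cost}(W)$ are attained by currency elements. If moreover $\mathcal C$ is tight for both $V$ and $W$, then $$\mathrm{Balance}(V\to W)=\mathrm{Yield}(V)-\mathrm{Cost}(W)=\mathrm{Cost}(V)-\mathrm{Cost}(W).$$
   Context: A resource theory $(S^\Omega,\mathcal T)$ consists of a set $\Omega$, the specification space $S^\Omega$ of all non-empty subsets of $\Omega$ (resources), and a set $\mathcal T$ of maps $f:S^\Omega\to S^\Omega$ acting element-wise, $f(V)=\bigcup_{\nu\in V} f(\{\nu\})$. $V\to W$ iff some $f\in\mathcal T$ has $f(V)\subseteq W$; $\to$ is assumed to be a pre-order. $\mathcal C\subseteq S^\Omega$ is a currency for target $\mathcal S\subseteq S^\Omega$ if (Order) any two elements of $\mathcal C$ are comparable under $\to$ and $\Omega\in\mathcal C$; (Universality) $\Omega\in\mathcal S$ and every $V\in\mathcal S$ has $C,C'\in\mathcal C$ with $C\to V$, $V\to C'$. A value function $\mathrm{Val}:\mathcal C\to\mathbb R_{\ge0}$ satisfies $\mathrm{Val}(C')\ge\mathrm{Val}(C)\iff C'\to C$ and $\mathrm{Val}(\Omega)=0$; $c_{\sup}=\sup_{C\in\mathcal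 C}\mathrm{Val}(C)$ (possibly $\infty$). $\mathrm{Cost}(V)=\inf\{\mathrm{Val}(C): C\in\mathcal C,\ C\to V\}$, $\mathrm{Yield}(V)=\sup\{\mathrm{Val}(C): C\in\mathcal C,\ V\to C\}$. The currency is tight for $V$ if there is $C\in\mathcal C$ with $C\to V$ and $V\to C$. Independence: $C\cap V\ne\emptyset$ for all $C\in\mathcal C,V\in\mathcal S$, and $C\to C'$ implies $C\cap V\to C'\cap V$ for all $V\in\mathcal S$. Balance: $\mathrm{Balance}(V\to W\mid C)=\sup\{\mathrm{Val}(C')-\mathrm{Val}(C): C'\in\mathcal C,\ V\cap C\to W\cap C'\}$ (with $\sup\emptyset=-\infty$) and $\mathrm{Balance}(V\to W)=\sup_{C\in\mathcal C}\mathrm{Balance}(V\to W\mid C)$. Fairness: $\mathcal C$ is independent of $\mathcal S$, and for all $V,W\in\mathcal S$ and $C_1,C_2\in\mathcal C$ with $V\cap C_1\to W\cap C_2$, setting $\Delta=\mathrm{Val}(C_2)-\mathrm{Val}(C_1)$: (F1) for every $C_1'\in\mathcal C$ with $-\Delta\le\mathrm{Val}(C_1')<c_{\sup}-\Delta$ there is $C_2'\in\mathcal C$ with $V\cap C_1'\to W\cap C_2'$ and $\mathrm{Val}(C_2')-\mathrm{Val}(C_1')=\Delta$; (F2) for every $C_2'\in\mathcal C$ with $\Delta\le\mathrm{Val}(C_2')$ there is $C_1'\in\mathcal C$ with $V\cap C_1'\to W\cap C_2'$ and $\mathrm{Val}(C_2')-\mathrm{Val}(C_1')=\Delta$. *)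

(* Defs.v *)
From Stdlib Require Import Reals Lra Classical ClassicalEpsilon.
Open Scope R_scope.
Set Implicit Arguments.
Unset Strict Implicit.

Inductive Rbar : Type := Fin (r : R) | PInf | MInf.

Definition Rbar_le (x y : Rbar) : Prop :=
  match x, y with
  | MInf, _ => True
  | _, PInf => True
  | Fin a, Fin b => a <= b
  | _, _ => False
  end.

Definition Rbar_lt (x y : Rbar) : Prop := Rbar_le x y /\ x <> y.

Definition Rbar_opp (x : Rbar) : Rbar :=
  match x with Fin a => Fin (- a) | PInf => MInf | MInf => PInf end.

(* The case PInf + MInf never occurs below (Cost is always finite);
   we fix an arbitrary convention for it. *)
Definition Rbar_plus (x y : Rbar) : Rbar :=
  match x, y with
  | Fin a, Fin b => Fin (a + b)
  | PInf, MInf | MInf, PInf => MInf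
  | PInf, _ | _, PInf => PInf
  | _, _ => MInf
  end.

Definition Rbar_minus (x y : Rbar) : Rbar := Rbar_plus x (Rbar_opp y).

Definition is_sup_Rbar (P : Rbar -> Prop) (s : Rbar) : Prop :=
  (forall x, P x -> Rbar_le x s) /\
  (forall u, (forall x, P x -> Rbar_le x u) -> Rbar_le s u).

Definition is_inf_Rbar (P : Rbar -> Prop) (s : Rbar) : Prop :=
  (forall x, P x -> Rbar_le s x) /\
  (forall u, (forall x, P x -> Rbar_le u x) -> Rbar_le u s).

(* sup / inf (they always exist in the extended reals; sup of the empty set is MInf) *)
Definition Rbar_sup (P : Rbar -> Prop) : Rbar :=
  epsilon (inhabits MInf) (is_sup_Rbar P).
Definition Rbar_inf (P : Rbar -> Prop) : Rbar :=
  epsilon (inhabits PInf) (is_inf_Rbar P).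

Section RT.
Variable Omega : Type.

(* subsets of Omega; the specification space S^Omega = non-empty subsets *)
Definition rset := Omega -> Prop.
Definition nonempty (V : rset) : Prop := exists x, V x.
Definition fullset : rset := fun _ => True.
Definition inter (V W : rset) : rset := fun x => V x /\ W x.
Definition subset (V W : rset) : Prop := forall x, V x -> W x.

(* A map f : S^Omega -> S^Omega acting element-wise is determined by
   nu |-> f({nu}); we represent it by that function  g : Omega -> rset,
   so that f(V) = \bigcup_{nu in V} g nu. *)
Definition elem_map := Omega -> rset.
Definition apply_map (g : elem_map) (V : rset) : rset :=
  fun y => exists nu, V nu /\ g nu y.

Definition reaches (T : elem_map -> Prop) (V W : rset) : Prop :=
  exists g, T g /\ subset (apply_map g V) W.

(* (S^Omega, T) is a resource theory: maps send S^Omega into S^Omega,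
   and -> is a pre-order on S^Omega. *)
Definition is_resource_theory (T : elem_map -> Prop) : Prop :=
  (forall g, T g -> forall nu, nonempty (g nu)) /\
  (forall V, nonempty V -> reaches T V V) /\
  (forall U V W, nonempty U -> nonempty V -> nonempty W ->
     reaches T U V -> reaches T V W -> reaches T U W).

Variable T : elem_map -> Prop.
Variable Cc : rset -> Prop.
Variable Ss : rset -> Prop.
Variable Val : rset -> R.     (* value function, relevant on C only *)

Definition is_currency : Prop :=
  (forall C, Cc C -> nonempty C) /\
  (forall V, Ss V -> nonempty V) /\
  (forall C C', Cc C -> Cc C' -> reaches T C C' \/ reaches T C' C) /\
  Cc fullset /\
  Ss fullset /\
  (forall V, Ss V ->
     (exists C, Cc C /\ reaches T C V) /\ (exists C', Cc C' /\ reaches T V C')).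

Definition is_value_function : Prop :=
  (forall C, Cc C -> 0 <= Val C) /\
  (forall C C', Cc C -> Cc C' -> (Val C' >= Val C <-> reaches T C' C)) /\
  Val fullset = 0.

Definition c_sup : Rbar := Rbar_sup (fun x => exists C, Cc C /\ x = Fin (Val C)).

Definition Cost (V : rset) : Rbar :=
  Rbar_inf (fun x => exists C, Cc C /\ reaches T C V /\ x = Fin (Val C)).

Definition Yield (V : rset) : Rbar :=
  Rbar_sup (fun x => exists C, Cc C /\ reaches T V C /\ x = Fin (Val C)).

Definition tight_for (V : rset) : Prop :=
  exists C, Cc C /\ reaches T C V /\ reaches T V C.

Definition independent : Prop :=
  (forall C V, Cc C -> Ss V -> nonempty (inter C V)) /\
  (forall C C', Cc C -> Cc C' -> reaches T C C' ->
     forall V, Ss V -> reaches T (inter C V) (inter C' V)).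

(* Balance(V -> W | C) ; sup of the empty set is MInf *)
Definition Balance_cond (V W C : rset) : Rbar :=
  Rbar_sup (fun x => exists C', Cc C' /\
     reaches T (inter V C) (inter W C') /\ x = Fin (Val C' - Val C)).

Definition Balance (V W : rset) : Rbar :=
  Rbar_sup (fun x => exists C, Cc C /\ x = Balance_cond V W C).

Definition is_fair : Prop :=
  independent /\
  forall V W C1 C2, Ss V -> Ss W -> Cc C1 -> Cc C2 ->
    reaches T (inter V C1) (inter W C2) ->
    let Delta := Val C2 - Val C1 in
    (* (F1) *)
    (forall C1', Cc C1' -> - Delta <= Val C1' ->
        Rbar_lt (Fin (Val C1')) (Rbar_minus c_sup (Fin Delta)) ->
        exists C2', Cc C2' /\ reaches T (inter V C1') (inter W C2') /\
                    Val C2' - Val C1' = Delta) /\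
    (* (F2) *)
    (forall C2', Cc C2' -> Delta <= Val C2' ->
        exists C1', Cc C1' /\ reaches T (inter V C1') (inter W C2') /\
                    Val C2' - Val C1' = Delta).

End RT.

(* Main.v *)
Require Import Defs.
From Stdlib Require Import Reals.
From Stdlib Require Import Lra Classical ClassicalEpsilon.
Open Scope R_scope.

Lemma Rbar_le_trans x y z : Rbar_le x y -> Rbar_le y z -> Rbar_le x z.
Proof. destruct x, y, z; cbn; intros; try tauto; lra. Qed.

Lemma Rbar_le_antisym x b : Rbar_le x (Fin b) -> Rbar_le (Fin b) x -> x = Fin b.
Proof. destruct x; cbn; intros; try contradiction. f_equal; lra. Qed.

Lemma sup_exists (P : Rbar -> Prop) : exists s, is_sup_Rbar P s.
Proof.
  destruct (classic (P PInf)) as [HP|HnP].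
  { exists PInf. split.
    - intros x _; destruct x; cbn; auto.
    - intros u Hu. apply Hu; exact HP. }
  destruct (classic (exists r, P (Fin r))) as [[a Ha]|Hno].
  - destruct (classic (exists b, forall r, P (Fin r) -> r <= b)) as [[b Hb]|Hunb].
    + destruct (completeness (fun r => P (Fin r))) as [l [Hl1 Hl2]].
      { exists b; intros r Hr; apply Hb; exact Hr. }
      { exists a; exact Ha. }
      exists (Fin l). split.
      * intros x Hx; destruct x as [r| |]; cbn; auto.
        all: try (apply Hl1; exact Hx).
      * intros u Hu; destruct u as [c| |]; cbn; auto.
        -- apply Hl2. intros r Hr. exact (Hu _ Hr).
        -- exact (Hu _ Ha).
    + exists PInf. split.
      * intros x _; destruct x; cbn; auto.
      * intros u Hu; destruct u as [c| |]; cbn; auto.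
        -- apply Hunb. exists c. intros r Hr. exact (Hu _ Hr).
        -- exact (Hu _ Ha).
  - exists MInf. split.
    + intros x Hx; destruct x as [r| |]; cbn; auto.
      apply Hno; exists r; exact Hx.
    + intros u _; destruct u; cbn; auto.
Qed.

Lemma Rbar_le_opp x y : Rbar_le (Rbar_opp x) (Rbar_opp y) <-> Rbar_le y x.
Proof. destruct x, y; cbn; split; intros; try tauto; lra. Qed.
Lemma Rbar_opp_opp x : Rbar_opp (Rbar_opp x) = x.
Proof. destruct x; cbn; auto; rewrite Ropp_involutive; auto. Qed.

Lemma inf_exists (P : Rbar -> Prop) : exists s, is_inf_Rbar P s.
Proof.
  destruct (sup_exists (fun x => P (Rbar_opp x))) as [s [H1 H2]].
  exists (Rbar_opp s). split.
  - intros x Hx. rewrite <- (Rbar_opp_opp x). apply Rbar_le_opp. apply H1.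
    cbv beta. rewrite Rbar_opp_opp. exact Hx.
  - intros u Hu. rewrite <- (Rbar_opp_opp u). apply Rbar_le_opp. apply H2.
    intros x Hx. rewrite <- (Rbar_opp_opp x). apply Rbar_le_opp.
    apply Hu. exact Hx.
Qed.

Lemma Rbar_sup_spec P : is_sup_Rbar P (Rbar_sup P).
Proof. unfold Rbar_sup; apply epsilon_spec; apply sup_exists. Qed.
Lemma Rbar_inf_spec P : is_inf_Rbar P (Rbar_inf P).
Proof. unfold Rbar_inf; apply epsilon_spec; apply inf_exists. Qed.

Lemma sup_fin (P : Rbar -> Prop) a b : P (Fin a) -> (forall x, P x -> Rbar_le x (Fin b)) ->
  exists y, Rbar_sup P = Fin y /\ (forall r, P (Fin r) -> r <= y) /\
    (forall u, (forall r, P (Fin r) -> r <= u) -> y <= u).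
Proof.
  intros Ha Hb. destruct (Rbar_sup_spec P) as [H1 H2].
  revert H1 H2. destruct (Rbar_sup P) as [y| |]; intros H1 H2.
  - exists y. split; [reflexivity|split].
    + intros r Hr. exact (H1 _ Hr).
    + intros u Hu. apply (H2 (Fin u)). intros x Hx. destruct x as [r| |]; cbn; auto.
      all: first [exact (Hu _ Hx) | exact (Hb _ Hx)].
  - exfalso. exact (H2 (Fin b) Hb).
  - exfalso. exact (H1 _ Ha).
Qed.

Lemma inf_fin (P : Rbar -> Prop) a b : P (Fin a) -> (forall x, P x -> Rbar_le (Fin b) x) ->
  exists k, Rbar_inf P = Fin k /\ (forall r, P (Fin r) -> k <= r) /\
    (forall u, (forall r, P (Fin r) -> u <= r) -> u <= k).
Proof.
  intros Ha Hb. destruct (Rbar_inf_spec P) as [H1 H2].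
  revert H1 H2. destruct (Rbar_inf P) as [y| |]; intros H1 H2.
  - exists y. split; [reflexivity|split].
    + intros r Hr. exact (H1 _ Hr).
    + intros u Hu. apply (H2 (Fin u)). intros x Hx. destruct x as [r| |]; cbn; auto.
      all: first [exact (Hu _ Hx) | exact (Hb _ Hx)].
  - exfalso. exact (H1 _ Ha).
  - exfalso. exact (H2 (Fin b) Hb).
Qed.

Lemma approx_sup (A : R -> Prop) y : (forall u, (forall r, A r -> r <= u) -> y <= u) ->
  forall eps, 0 < eps -> exists r, A r /\ y - eps < r.
Proof.
  intros H eps He. apply NNPP; intro Hn.
  assert (y <= y - eps); [|lra].
  apply H. intros r Hr. destruct (Rle_or_lt r (y - eps)); auto.
  exfalso; apply Hn; exists r; split; auto.
Qed.

Lemma approx_inf (A : R -> Prop) y : (forall u, (forall r, A r -> u <= r) -> u <= y) ->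
  forall eps, 0 < eps -> exists r, A r /\ r < y + eps.
Proof.
  intros H eps He. apply NNPP; intro Hn.
  assert (y + eps <= y); [|lra].
  apply H. intros r Hr. destruct (Rle_or_lt (y + eps) r); auto.
  exfalso; apply Hn; exists r; split; auto.
Qed.

Lemma reaches_mono Omega (T : elem_map Omega -> Prop) A B A' B' :
  reaches T A B -> subset A' A -> subset B B' -> reaches T A' B'.
Proof.
  intros [g [Tg Hs]] H1 H2. exists g. split; auto.
  intros y [nu [Ha Hg]]. apply H2, Hs. exists nu; split; auto.
Qed.

Theorem mainTheorem10
  (Omega : Type) (T : elem_map Omega -> Prop)
  (Cc Ss : rset Omega -> Prop) (Val : rset Omega -> R)
  (HT : is_resource_theory T)
  (HC : is_currency T Cc Ss)
  (HVal : is_value_function T Cc Val)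
  (Hfair : is_fair T Cc Ss Val) :
  forall V W, Ss V -> Ss W ->
    (forall eps, 0 < eps ->
       Rbar_le (Rbar_minus (Rbar_minus (Yield T Cc Val V) (Cost T Cc Val W)) (Fin eps))
               (Balance T Cc Val V W)) /\
    ((exists C, Cc C /\ reaches T V C /\ Yield T Cc Val V = Fin (Val C)) ->
     (exists C, Cc C /\ reaches T C W /\ Cost T Cc Val W = Fin (Val C)) ->
       Rbar_le (Rbar_minus (Yield T Cc Val V) (Cost T Cc Val W))
               (Balance T Cc Val V W)) /\
    (tight_for T Cc V -> tight_for T Cc W ->
       Balance T Cc Val V W = Rbar_minus (Yield T Cc Val V) (Cost T Cc Val W) /\
       Rbar_minus (Yield T Cc Val V) (Cost T Cc Val W)
         = Rbar_minus (Cost T Cc Val V) (Cost T Cc Val W)).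
Proof.
  destruct HT as [Tne [Trefl Ttrans]].
  destruct HC as [Cne [Sne [Cord [Cfull [Sfull Suniv]]]]].
  destruct HVal as [Vnn [Vmono Vfull]].
  destruct Hfair as [[Ind1 Ind2] Hf].
  assert (NE1 : forall X C, Ss X -> Cc C -> nonempty (inter X C)).
  { intros X C HX HCc. destruct (Ind1 C X HCc HX) as [x [H1 H2]]. exists x; split; auto. }
  assert (Vle : forall C C', Cc C -> Cc C' -> reaches T C' C -> Val C <= Val C').
  { intros C C' H1 H2 H3. apply Rge_le. apply (proj2 (Vmono C C' H1 H2)). exact H3. }
  assert (Vre : forall C C', Cc C -> Cc C' -> Val C <= Val C' -> reaches T C' C).
  { intros C C' H1 H2 H3. apply (proj1 (Vmono C C' H1 H2)). lra. }
  assert (KEY : forall V W Cy Cw, Ss V -> Ss W -> Cc Cy -> Cc Cw -> reaches T V Cy ->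
     reaches T Cw W -> exists C1 C2, Cc C1 /\ Cc C2 /\
     reaches T (inter V C1) (inter W C2) /\ Val C2 - Val C1 = Val Cy - Val Cw).
  { intros V W Cy Cw HV HW HCy HCw HVy HwW.
    assert (R1 : reaches T (inter (@fullset Omega) Cw) (inter W (@fullset Omega))).
    { eapply reaches_mono; [exact HwW| |].
      - intros x Hx; destruct Hx; assumption.
      - intros x Hx; split; [assumption|exact I]. }
    pose proof (Hf (@fullset Omega) W Cw (@fullset Omega) Sfull HW HCw Cfull R1) as HH. cbv zeta in HH.
    destruct HH as [_ F2].
    assert (c1 : Val (@fullset Omega) - Val Cw <= Val Cy).
    { rewrite Vfull. pose proof (Vnn _ HCy); pose proof (Vnn _ HCw); lra. }
    destruct (F2 Cy HCy c1) as [M [HM [RM EM]]].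
    assert (R2 : reaches T (inter V (@fullset Omega)) (inter (@fullset Omega) Cy)).
    { eapply reaches_mono; [exact HVy| |].
      - intros x Hx; destruct Hx; assumption.
      - intros x Hx; split; [exact I|assumption]. }
    pose proof (Hf V (@fullset Omega) (@fullset Omega) Cy HV Sfull Cfull HCy R2) as HH. cbv zeta in HH.
    destruct HH as [_ G2].
    assert (c2 : Val Cy - Val (@fullset Omega) <= Val M).
    { rewrite Vfull in *. pose proof (Vnn _ HCw). lra. }
    destruct (G2 M HM c2) as [N [HN [RN EN]]].
    exists N, Cy. split; [exact HN|split;[exact HCy|split]].
    - apply (Ttrans (inter V N) (inter (@fullset Omega) M) (inter W Cy)); auto.
    - rewrite Vfull in *; lra. }
  assert (BLOW : forall V W Cy Cw, Ss V -> Ss W -> Cc Cy -> Cc Cw -> reaches T V Cy ->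
     reaches T Cw W -> Rbar_le (Fin (Val Cy - Val Cw)) (Balance T Cc Val V W)).
  { intros V W Cy Cw HV HW HCy HCw HVy HwW.
    destruct (KEY V W Cy Cw) as [C1 [C2 [H1 [H2 [H3 H4]]]]]; auto.
    destruct (Rbar_sup_spec (fun x => exists C', Cc C' /\
       reaches T (inter V C1) (inter W C') /\ x = Fin (Val C' - Val C1))) as [U1 _].
    destruct (Rbar_sup_spec (fun x => exists C, Cc C /\ x = Balance_cond T Cc Val V W C))
      as [U2 _].
    apply Rbar_le_trans with (Balance_cond T Cc Val V W C1).
    - rewrite <- H4. apply U1. exists C2. repeat split; auto.
    - apply U2. exists C1. split; auto. }
  assert (YF : forall V, Ss V -> exists y, Yield T Cc Val V = Fin y /\
     (forall C, Cc C -> reaches T V C -> Val C <= y) /\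
     (forall u, (forall C, Cc C -> reaches T V C -> Val C <= u) -> y <= u)).
  { intros V HV. destruct (Suniv V HV) as [[C1 [HC1 R1]] [C2 [HC2 R2]]].
    destruct (sup_fin (fun x => exists C, Cc C /\ reaches T V C /\ x = Fin (Val C))
      (Val C2) (Val C1)) as [y [E [U L]]].
    - exists C2; repeat split; auto.
    - intros x [C [HC [RC ->]]]. cbn. apply Vle; auto. apply (Ttrans C1 V C); auto.
    - exists y; split; [exact E|split].
      + intros C HC RC. apply U. exists C; repeat split; auto.
      + intros u Hu. apply L. intros r [C [HC [RC Er]]]. injection Er; intros Er'.
        rewrite Er'. apply Hu; auto. }
  assert (CF : forall W, Ss W -> exists k, Cost T Cc Val W = Fin k /\
     (forall C, Cc C -> reaches T C W -> k <= Val C) /\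
     (forall u, (forall C, Cc C -> reaches T C W -> u <= Val C) -> u <= k)).
  { intros W HW. destruct (Suniv W HW) as [[C1 [HC1 R1]] _].
    destruct (inf_fin (fun x => exists C, Cc C /\ reaches T C W /\ x = Fin (Val C))
      (Val C1) 0) as [k [E [U L]]].
    - exists C1; repeat split; auto.
    - intros x [C [HC [RC ->]]]. cbn. apply Vnn; auto.
    - exists k; split; [exact E|split].
      + intros C HC RC. apply U. exists C; repeat split; auto.
      + intros u Hu. apply L. intros r [C [HC [RC Er]]]. injection Er; intros Er'.
        rewrite Er'. apply Hu; auto. }
  intros V W HV HW.
  destruct (YF V HV) as [y [Ey [Uy Ly]]].
  destruct (CF W HW) as [k [Ek [Uk Lk]]].
  rewrite Ey, Ek.
  split; [|split].
  - intros eps He.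
    assert (Ly' : forall u, (forall r, (exists C, Cc C /\ reaches T V C /\ r = Val C) -> r <= u)
       -> y <= u).
    { intros u Hu. apply Ly. intros C HC RC. apply Hu. exists C; auto. }
    assert (Lk' : forall u, (forall r, (exists C, Cc C /\ reaches T C W /\ r = Val C) -> u <= r)
       -> u <= k).
    { intros u Hu. apply Lk. intros C HC RC. apply Hu. exists C; auto. }
    destruct (approx_sup _ _ Ly' (eps/2)) as [r [[Cy [HCy [RCy ->]]] Hr]]; [lra|].
    destruct (approx_inf _ _ Lk' (eps/2)) as [s [[Cw [HCw [RCw ->]]] Hs]]; [lra|].
    apply Rbar_le_trans with (Fin (Val Cy - Val Cw)).
    + cbn. lra.
    + apply BLOW; auto.
  - intros [Cy [HCy [RCy Ey']]] [Cw [HCw [RCw Ek']]].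
    injection Ey'; intros E1. injection Ek'; intros E2.
    apply Rbar_le_trans with (Fin (Val Cy - Val Cw)).
    + cbn. lra.
    + apply BLOW; auto.
  - intros [C0 [HC0 [R0a R0b]]] [D0 [HD0 [RDa RDb]]].
    destruct (CF V HV) as [kv [Ekv [Ukv Lkv]]]. rewrite Ekv.
    assert (Hy1 : Val C0 <= y) by (apply Uy; auto).
    assert (Hy2 : y <= Val C0).
    { apply Ly. intros C HC RC. apply Vle; auto. apply (Ttrans C0 V C); auto. }
    assert (Hk1 : kv <= Val C0) by (apply Ukv; auto).
    assert (Hk2 : Val C0 <= kv).
    { apply Lkv. intros C HC RC. apply Vle; auto. apply (Ttrans C V C0); auto. }
    assert (Hw1 : k <= Val D0) by (apply Uk; auto).
    assert (Hw2 : Val D0 <= k).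
    { apply Lk. intros C HC RC. apply Vle; auto. apply (Ttrans C W D0); auto. }
    split.
    2: { replace kv with y by lra. reflexivity. }
    assert (UB : forall C C', Cc C -> Cc C' -> reaches T (inter V C) (inter W C') ->
              Val C' - Val C <= Val C0 - Val D0).
    { intros C C' HC HC' RCC.
      destruct (classic (exists Cp, Cc Cp /\ 0 < Val Cp)) as [[Cp [HCp Pp]]|Hzero].
      2: { assert (Z : forall X, Cc X -> Val X = 0).
           { intros X HX. pose proof (Vnn X HX).
             destruct (Rle_lt_dec (Val X) 0); [lra|].
             exfalso; apply Hzero; exists X; split; auto. }
           rewrite (Z C), (Z C'), (Z C0), (Z D0); auto; lra. }
      assert (CS : c_sup Cc Val = PInf).
      { destruct (Rbar_sup_spec (fun x => exists C, Cc C /\ x = Fin (Val C))) as [U L].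
        unfold c_sup. revert U L.
        destruct (Rbar_sup (fun x => exists C, Cc C /\ x = Fin (Val C))) as [s| |];
          intros U L; auto.
        - exfalso.
          assert (Ls : forall u, (forall r, (exists X, Cc X /\ r = Val X) -> r <= u) -> s <= u).
          { intros u Hu. apply (L (Fin u)). intros x [X [HX ->]]. cbn. apply Hu.
            exists X; auto. }
          destruct (approx_sup _ _ Ls (Val Cp) Pp) as [r [[X [HX ->]] Hr]].
          assert (Rp : reaches T (inter (@fullset Omega) Cp) (inter (@fullset Omega) (@fullset Omega))).
          { eapply reaches_mono; [apply (Vre (@fullset Omega) Cp); auto; rewrite Vfull; lra| |].
            - intros x Hx; destruct Hx; assumption.
            - intros x Hx; split; exact I. }
          pose proof (Hf (@fullset Omega) (@fullset Omega) Cp (@fullset Omega) Sfull Sfull HCp Cfull Rp) as HH.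
          cbv zeta in HH. destruct HH as [_ F2].
          assert (c : Val (@fullset Omega) - Val Cp <= Val X).
          { rewrite Vfull. pose proof (Vnn _ HX). lra. }
          destruct (F2 X HX c) as [X1 [HX1 [_ EX1]]].
          assert (Hle := U (Fin (Val X1)) (ex_intro _ X1 (conj HX1 eq_refl))).
          cbn in Hle. rewrite Vfull in EX1. lra.
        - exfalso. exact (U (Fin (Val (@fullset Omega))) (ex_intro _ (@fullset Omega) (conj Cfull eq_refl))). }
      assert (R3 : reaches T (inter W (@fullset Omega)) (inter (@fullset Omega) D0)).
      { eapply reaches_mono; [exact RDb| |].
        - intros x Hx; destruct Hx; assumption.
        - intros x Hx; split; [exact I|assumption]. }
      pose proof (Hf W (@fullset Omega) (@fullset Omega) D0 HW Sfull Cfull HD0 R3) as HH. cbv zeta in HH.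
      destruct HH as [F1 _].
      assert (c1 : - (Val D0 - Val (@fullset Omega)) <= Val C').
      { rewrite Vfull. pose proof (Vnn _ HD0); pose proof (Vnn _ HC'). lra. }
      assert (c2 : Rbar_lt (Fin (Val C'))
                 (Rbar_minus (c_sup Cc Val) (Fin (Val D0 - Val (@fullset Omega))))).
      { rewrite CS. unfold Rbar_lt. cbn. split; [exact I|discriminate]. }
      destruct (F1 C' HC' c1 c2) as [F [HF [RF EF]]].
      assert (R4 : reaches T (inter (@fullset Omega) C0) (inter V (@fullset Omega))).
      { eapply reaches_mono; [exact R0a| |].
        - intros x Hx; destruct Hx; assumption.
        - intros x Hx; split; [assumption|exact I]. }
      pose proof (Hf (@fullset Omega) V C0 (@fullset Omega) Sfull HV HC0 Cfull R4) as HH. cbv zeta in HH.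
      destruct HH as [_ G2].
      assert (c3 : Val (@fullset Omega) - Val C0 <= Val C).
      { rewrite Vfull. pose proof (Vnn _ HC0); pose proof (Vnn _ HC). lra. }
      destruct (G2 C HC c3) as [M [HM [RM EM]]].
      assert (RMF : reaches T (inter (@fullset Omega) M) (inter (@fullset Omega) F)).
      { apply (Ttrans (inter (@fullset Omega) M) (inter V C) (inter (@fullset Omega) F)); auto.
        apply (Ttrans (inter V C) (inter W C') (inter (@fullset Omega) F)); auto. }
      assert (RMF' : reaches T M F).
      { eapply reaches_mono; [exact RMF| |].
        - intros x Hx; split; [exact I|assumption].
        - intros x Hx; destruct Hx; assumption. }
      pose proof (Vle F M HF HM RMF'). rewrite Vfull in *. lra. }
    apply eq_trans with (Fin (Val C0 - Val D0)).
    2: { cbn. f_equal. lra. }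
    apply Rbar_le_antisym.
    + destruct (Rbar_sup_spec (fun x => exists C, Cc C /\ x = Balance_cond T Cc Val V W C))
        as [_ L2].
      apply (L2 (Fin (Val C0 - Val D0))). intros x [C [HC ->]].
      destruct (Rbar_sup_spec (fun x => exists C', Cc C' /\
         reaches T (inter V C) (inter W C') /\ x = Fin (Val C' - Val C))) as [_ L1].
      apply L1. intros x [C' [HC' [RC' ->]]]. cbn. apply UB; auto.
    + apply BLOW; auto.
Qed.
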